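(* There exist constants $C_1,C_2>0$ (depending only on $r$) such that for all $x\ge1$, $$\limsup_{N\to\infty}\sum_{k=1}^N P\big(R_{k,N}>xN^{1-r}\big)\le C_1e^{-C_2x^{1/r}}.$$
   Context: Fix $r\in(0,1)$. Consider the following multitype Yule process. At time $0$ a single individual of type $1$ is born. No individual ever dies, and each individual independently gives birth at rate $1$. When a new individual is born, independently of everything else, with probability $1-r$ it has the same type as its parent and with probability $r$ it has a new type different from all previously observed types. Individuals are numbered in order of birth (the initial one is the 1st); if the $k$-th individual born has a type different from its parent, that type is called type $k$. Let $T_N$ be the time the population size reaches $N$, and $R_{k,N}$ the number of type-$k$ individuals at time $T_N$. *)

(* Defs.v *)
From Stdlib Require Import Reals List Arith.
From Coquelicot Require Import Coquelicot.
Import ListNotations.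
Open Scope R_scope.

(* Genealogical history of the multitype Yule process up to the time the
   population has n+1 individuals (n births after the initial one).
   Individuals have 0-based ids 0,1,2,...; the j-th entry (0-based) of a
   history describes individual j+1 as (parent id, mutated?). *)
Definition history := list (nat * bool).

(* At the birth of
   individual n+1 the population has n+1 individuals, each giving birth at
   rate 1, so the parent is uniform on {0,...,n}; the child gets a new type
   with probability r and its parent's type with probability 1-r. *)
Fixpoint hists (r : R) (n : nat) : list (history * R) :=
  match n with
  | O => [([], 1)]
  | S m =>
      flat_map (fun hw : history * R =>
        flat_map (fun p : nat =>
          map (fun b : bool =>
                 (fst hw ++ [(p, b)],
                  snd hw * / INR (S m) * (if b then r else 1 - r)))
              [true; false])
          (seq 0 (S m)))
        (hists r m)
  end.

(* Types (labelled as in the paper, 1-based): the initial individual has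
   type 1; if the individual with 1-based number k (0-based id k-1) has a
   type different from its parent, that type is called type k. *)
Definition add_indiv (ts : list nat) (pb : nat * bool) : list nat :=
  ts ++ [if snd pb then S (length ts) else nth (fst pb) ts 0%nat].

Definition types_of (h : history) : list nat := fold_left add_indiv h [1%nat].

Definition Rcount (k : nat) (h : history) : nat :=
  count_occ Nat.eq_dec (types_of h) k.

(* P(R_{k,N} > x N^{1-r}) : the population reaches size N after N-1 births. *)
Definition prob_big (r x : R) (N k : nat) : R :=
  fold_right Rplus 0
    (map (fun hw : history * R =>
            if Rlt_dec (x * Rpower (INR N) (1 - r)) (INR (Rcount k (fst hw)))
            then snd hw else 0)
         (hists r (N - 1))).

Definition tail_sum (r x : R) (N : nat) : R :=
  fold_right Rplus 0 (map (prob_big r x N) (seq 1 N)).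

(* Main.v *)
Require Import Defs.
From Stdlib Require Import Reals List Arith Lia Lra.
From Coquelicot Require Import Coquelicot.
Import ListNotations.
Open Scope R_scope.

Definition sumL {A} (l : list A) (g : A -> R) : R := fold_right Rplus 0 (map g l).

Lemma sumL_app {A} (l1 l2 : list A) g : sumL (l1 ++ l2) g = sumL l1 g + sumL l2 g.
Proof. induction l1; unfold sumL in *; simpl; [ring| rewrite IHl1; ring]. Qed.

Lemma sumL_flat_map {A B} (f : A -> list B) l g :
  sumL (flat_map f l) g = sumL l (fun x => sumL (f x) g).
Proof. induction l; [reflexivity|]. simpl. rewrite sumL_app, IHl. reflexivity. Qed.

Lemma sumL_map {A B} (f : A -> B) l g : sumL (map f l) g = sumL l (fun x => g (f x)).
Proof. induction l; [reflexivity|]. unfold sumL in *; simpl. rewrite IHl. reflexivity. Qed.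

Lemma sumL_ext {A} (l : list A) g1 g2 : (forall x, In x l -> g1 x = g2 x) -> sumL l g1 = sumL l g2.
Proof. induction l; intros H; [reflexivity|]. unfold sumL in *; simpl.
  rewrite H by (left; auto). rewrite IHl; auto. intros; apply H; right; auto. Qed.

Lemma sumL_le {A} (l : list A) g1 g2 : (forall x, In x l -> g1 x <= g2 x) -> sumL l g1 <= sumL l g2.
Proof. induction l; intros H; unfold sumL in *; simpl; [lra|].
  apply Rplus_le_compat. apply H; left; auto. apply IHl. intros; apply H; right; auto. Qed.

Lemma sumL_scal {A} (l : list A) c g : sumL l (fun x => c * g x) = c * sumL l g.
Proof. induction l; unfold sumL in *; simpl; [ring| rewrite IHl; ring]. Qed.

Lemma sumL_plus {A} (l : list A) g1 g2 : sumL l (fun x => g1 x + g2 x) = sumL l g1 + sumL l g2.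
Proof. induction l; unfold sumL in *; simpl; [ring| rewrite IHl; ring]. Qed.

Lemma sumL_const {A} (l : list A) c : sumL l (fun _ => c) = INR (length l) * c.
Proof. induction l; unfold sumL in *; simpl length; [simpl; ring|]. rewrite S_INR. simpl. rewrite IHl. ring. Qed.

Lemma sumL_nonneg {A} (l : list A) g : (forall x, In x l -> 0 <= g x) -> 0 <= sumL l g.
Proof. intros H. replace 0 with (sumL l (fun _ => 0)). apply sumL_le; auto.
  rewrite sumL_const. ring. Qed.

Section Model.
Variable r : R.
Hypothesis hr : 0 < r < 1.

Lemma hists_S n : hists r (S n) = flat_map (fun hw : history * R =>
        flat_map (fun p : nat =>
          map (fun b : bool =>
                 (fst hw ++ [(p, b)],
                  snd hw * / INR (S n) * (if b then r else 1 - r)))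
              [true; false])
          (seq 0 (S n)))
        (hists r n).
Proof. reflexivity. Qed.

Definition E (n : nat) (g : history -> R) : R := sumL (hists r n) (fun hw => snd hw * g (fst hw)).

Lemma hists_inv n : forall hw, In hw (hists r n) -> length (fst hw) = n /\ 0 <= snd hw.
Proof.
  induction n; intros hw H.
  - simpl in H. destruct H as [H|[]]. subst. simpl. split; [reflexivity|lra].
  - rewrite hists_S in H. apply in_flat_map in H. destruct H as [hw0 [H0 H1]].
    apply in_flat_map in H1. destruct H1 as [p [Hp H2]].
    apply in_map_iff in H2. destruct H2 as [b [Hb _]]. subst hw. cbn [fst snd].
    destruct (IHn hw0 H0) as [Hl Hw]. split.
    + rewrite length_app, Hl. simpl. lia.
    + apply Rmult_le_pos. apply Rmult_le_pos. auto. left; apply Rinv_0_lt_compat, lt_0_INR; lia.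
      destruct b; lra.
Qed.

Definition Step (n : nat) (g : history -> R) (h : history) : R :=
  sumL (seq 0 (S n)) (fun p => / INR (S n) * (r * g (h ++ [(p, true)]) + (1 - r) * g (h ++ [(p, false)]))).

Lemma E_S n g : E (S n) g = E n (Step n g).
Proof.
  unfold E. rewrite hists_S, sumL_flat_map. apply sumL_ext. intros hw _.
  rewrite sumL_flat_map. unfold Step. rewrite <- sumL_scal. apply sumL_ext. intros p _.
  rewrite sumL_map. unfold sumL; simpl. ring.
Qed.

Lemma E_ext n g1 g2 : (forall h, length h = n -> g1 h = g2 h) -> E n g1 = E n g2.
Proof. intros H. unfold E. apply sumL_ext. intros hw Hin. destruct (hists_inv n hw Hin).
  rewrite H; auto. Qed.

Lemma E_le n g1 g2 : (forall h, length h = n -> g1 h <= g2 h) -> E n g1 <= E n g2.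
Proof. intros H. unfold E. apply sumL_le. intros hw Hin. destruct (hists_inv n hw Hin).
  apply Rmult_le_compat_l; auto. Qed.

Lemma E_scal n c g : E n (fun h => c * g h) = c * E n g.
Proof. unfold E. rewrite <- sumL_scal. apply sumL_ext. intros; ring. Qed.

Lemma E_one n : E n (fun _ => 1) = 1.
Proof.
  induction n. unfold E; simpl; unfold sumL; simpl; ring.
  rewrite E_S. transitivity (E n (fun _ => 1)); [|exact IHn]. apply E_ext. intros h _. unfold Step.
  rewrite sumL_const, length_seq. field. apply not_0_INR; lia.
Qed.

End Model.


Lemma types_app h pb : types_of (h ++ [pb]) = add_indiv (types_of h) pb.
Proof. unfold types_of. rewrite fold_left_app. reflexivity. Qed.

Lemma len_fold h : forall ts, length (fold_left add_indiv h ts) = (length ts + length h)%nat.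
Proof. induction h; intros ts; simpl. lia. rewrite IHh. unfold add_indiv. rewrite length_app. simpl. lia. Qed.

Lemma len_types h : length (types_of h) = S (length h).
Proof. unfold types_of. rewrite len_fold. reflexivity. Qed.

Lemma lab_fold h : forall ts, (forall z, In z ts -> (z <= length ts)%nat) ->
  forall z, In z (fold_left add_indiv h ts) -> (z <= length (fold_left add_indiv h ts))%nat.
Proof.
  induction h; intros ts Hts; simpl. exact Hts.
  apply IHh. intros z Hz. unfold add_indiv in *. rewrite length_app. simpl.
  apply in_app_or in Hz. destruct Hz as [Hz|[Hz|[]]].
  - specialize (Hts z Hz). lia.
  - subst z. destruct (snd a). lia.
    destruct (Nat.lt_ge_cases (fst a) (length ts)).
    + specialize (Hts _ (nth_In ts 0%nat H)). lia.
    + rewrite nth_overflow by lia. lia.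
Qed.

Lemma lab_types h z : In z (types_of h) -> (z <= length (types_of h))%nat.
Proof. apply lab_fold. intros z0 [H|[]]. subst; simpl; lia. Qed.

Fixpoint rise (c : R) (q : nat) : R :=
  match q with O => 1 | S q' => rise c q' * (c + INR q') end.

Lemma rise_id c q : rise (c + 1) q * c = rise c q * (c + INR q).
Proof. induction q. simpl; ring. simpl rise. rewrite S_INR.
  replace (rise (c + 1) q * (c + 1 + INR q) * c) with (rise (c + 1) q * c * (c + 1 + INR q)) by ring.
  rewrite IHq. ring. Qed.

Lemma rise_nonneg c q : 0 <= c -> 0 <= rise c q.
Proof. intros Hc. induction q; simpl. lra. apply Rmult_le_pos; auto. pose proof (pos_INR q); lra. Qed.

Lemma rise_ge_pow c q : 0 <= c -> c ^ q <= rise c q.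
Proof. intros Hc. induction q; simpl. lra. rewrite Rmult_comm.
  apply Rmult_le_compat; auto. apply pow_le; auto. pose proof (pos_INR q); lra. Qed.

Lemma rise_0 q : (1 <= q)%nat -> rise 0 q = 0.
Proof. intros H. destruct q. lia. clear H. induction q. simpl; ring.
  change (rise 0 (S (S q))) with (rise 0 (S q) * (0 + INR (S q))). rewrite IHq; ring. Qed.

Lemma sum_nth (ts : list nat) (F : nat -> R) :
  sumL (seq 0 (length ts)) (fun p => F (nth p ts 0%nat)) = sumL ts F.
Proof.
  induction ts. reflexivity.
  simpl length. unfold sumL in *. simpl. rewrite <- seq_shift, map_map. simpl. rewrite IHts. reflexivity.
Qed.

Definition indic (z k : nat) : R := if Nat.eq_dec z k then 1 else 0.

Lemma sum_ind ts k : sumL ts (fun z => indic z k) = INR (count_occ Nat.eq_dec ts k).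
Proof. induction ts. reflexivity. unfold sumL in *. simpl. rewrite IHts. unfold indic.
  destruct (Nat.eq_dec a k); try rewrite S_INR; ring. Qed.

Lemma Rcount_app h k pb : INR (Rcount k (h ++ [pb])) = INR (Rcount k h) +
   indic (if snd pb then S (length (types_of h)) else nth (fst pb) (types_of h) 0%nat) k.
Proof.
  unfold Rcount. rewrite types_app. unfold add_indiv. rewrite count_occ_app, plus_INR. simpl.
  unfold indic. destruct (Nat.eq_dec _ k); simpl; ring.
Qed.

Section St.
Variable r : R.
Variable q : nat.

Lemma Step_rise n k h : length h = n ->
  Step r n (fun h => rise (INR (Rcount k h)) q) h =
  r * rise (INR (Rcount k h) + indic (S (S n)) k) q
  + (1 - r) * (1 + INR q / INR (S n)) * rise (INR (Rcount k h)) q.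
Proof.
  intros Hl. unfold Step. set (c := INR (Rcount k h)).
  assert (Hts : length (types_of h) = S n) by (rewrite len_types; lia).
  erewrite sumL_ext.
  2:{ intros p _. rewrite (Rcount_app h k (p,true)), (Rcount_app h k (p,false)). cbn [fst snd]. rewrite Hts. reflexivity. }
  rewrite sumL_scal, sumL_plus, sumL_scal, sumL_const, length_seq, sumL_scal.
  replace (seq 0 (S n)) with (seq 0 (length (types_of h))) by (rewrite Hts; reflexivity).
  rewrite (sum_nth (types_of h) (fun z => rise (INR (Rcount k h) + indic z k) q)).
  fold c.
  erewrite sumL_ext.
  2:{ intros z _. replace (rise (c + indic z k) q) with (rise c q + indic z k * (rise (c+1) q - rise c q)).
      reflexivity. unfold indic; destruct (Nat.eq_dec z k); [ring| rewrite Rplus_0_r; ring]. }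
  rewrite sumL_plus, sumL_const, Hts.
  erewrite sumL_ext. 2:{ intros z _. rewrite Rmult_comm. reflexivity. }
  rewrite sumL_scal, sum_ind.
  replace (INR (count_occ Nat.eq_dec (types_of h) k)) with c by reflexivity.
  assert (Hid : (rise (c + 1) q - rise c q) * c = INR q * rise c q).
  { rewrite Rmult_minus_distr_r, rise_id. ring. }
  rewrite Hid. field. apply not_0_INR; lia.
Qed.

End St.


Fixpoint G (b : R) (k P : nat) : R :=
  match P with
  | O => 0
  | S P' => if Nat.eqb k (S P') then 1 else G b k P' * (1 + b / INR P')
  end.

Lemma G_nonneg b k P : 0 <= b -> 0 <= G b k P.
Proof. intros Hb. induction P; simpl. lra. destruct (Nat.eqb k (S P)). lra.
  apply Rmult_le_pos; auto. destruct P. simpl. unfold Rdiv. rewrite Rinv_0, Rmult_0_r. lra.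
  assert (0 < INR (S P)) by (apply lt_0_INR; lia).
  assert (0 <= b / INR (S P)) by (apply Rdiv_le_0_compat; lra). lra. Qed.

Section Mom.
Variable r : R.
Hypothesis hr : 0 < r < 1.
Variable q : nat.
Hypothesis hq : (1 <= q)%nat.

Lemma moment n k : E r n (fun h => rise (INR (Rcount k h)) q) <=
   rise 1 q * G ((1 - r) * INR q) k (S n).
Proof.
  assert (Hb : 0 <= (1 - r) * INR q) by (apply Rmult_le_pos; [lra| apply pos_INR]).
  assert (H1 : 0 <= rise 1 q) by (apply rise_nonneg; lra).
  induction n.
  - unfold E, sumL. simpl hists. cbn [map fold_right fst snd].
    unfold G. unfold Rcount, types_of. simpl fold_left.
    destruct k as [|[|k]]; simpl.
    + rewrite rise_0 by auto. lra.
    + lra.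
    + rewrite rise_0 by auto. lra.
  - rewrite E_S.
    rewrite (E_ext r hr n _ (fun h => r * rise (INR (Rcount k h) + indic (S (S n)) k) q
         + (1 - r) * (1 + INR q / INR (S n)) * rise (INR (Rcount k h)) q)).
    2:{ intros h Hh. apply Step_rise; auto. }
    change (G ((1 - r) * INR q) k (S (S n))) with
      (if Nat.eqb k (S (S n)) then 1 else G ((1 - r) * INR q) k (S n) * (1 + (1 - r) * INR q / INR (S n))).
    destruct (Nat.eqb_spec k (S (S n))).
    + rewrite (E_ext r hr n _ (fun h => (r * rise 1 q) * 1)).
      { rewrite E_scal, E_one; auto. nra. }
      intros h Hh. assert (Rcount k h = 0%nat).
      { unfold Rcount. apply count_occ_not_In. intros Hin. apply lab_types in Hin.
        rewrite len_types in Hin. lia. }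
      rewrite H. unfold indic. destruct (Nat.eq_dec (S (S n)) k); [|lia]. simpl INR.
      rewrite rise_0 by auto. replace (0+1) with 1 by ring. ring.
    + rewrite (E_ext r hr n _ (fun h => (1 + (1 - r) * INR q / INR (S n)) * rise (INR (Rcount k h)) q)).
      { rewrite E_scal.
        assert (0 <= (1 - r) * INR q / INR (S n)) by (apply Rdiv_le_0_compat; auto; apply lt_0_INR; lia).
        replace (rise 1 q * (G ((1 - r) * INR q) k (S n) * (1 + (1 - r) * INR q / INR (S n))))
          with ((1 + (1 - r) * INR q / INR (S n)) * (rise 1 q * G ((1 - r) * INR q) k (S n))) by ring.
        apply Rmult_le_compat_l; lra. }
      intros h Hh. unfold indic. destruct (Nat.eq_dec (S (S n)) k); [lia|]. rewrite Rplus_0_r.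
      field. apply not_0_INR; lia.
Qed.

End Mom.


Lemma sumG b M : 1 < b -> sumL (seq 1 (S M)) (fun k => G b k (S M)) = (b * G b 1 (S M) - INR (S M)) / (b - 1).
Proof.
  intros Hb. induction M.
  - unfold sumL; simpl. field. lra.
  - rewrite seq_S, sumL_app.
    rewrite (sumL_ext _ _ (fun k => (1 + b / INR (S M)) * G b k (S M))).
    2:{ intros k Hk. apply in_seq in Hk. change (G b k (S (S M))) with
        (if Nat.eqb k (S (S M)) then 1 else G b k (S M) * (1 + b / INR (S M))).
        destruct (Nat.eqb_spec k (S (S M))); [lia|]. ring. }
    rewrite sumL_scal, IHM.
    change (G b 1 (S (S M))) with
        (if Nat.eqb 1 (S (S M)) then 1 else G b 1 (S M) * (1 + b / INR (S M))).
    simpl Nat.eqb. replace (1 + S M)%nat with (S (S M)) by lia.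
    unfold sumL; simpl map; simpl fold_right. rewrite Nat.eqb_refl.
    rewrite (S_INR (S M)). assert (INR (S M) <> 0) by (apply not_0_INR; lia). assert (b - 1 <> 0) by lra. field; auto.
Qed.

Section Mk.
Variable r : R.
Hypothesis hr : 0 < r < 1.
Variable q : nat.
Hypothesis hq : (1 <= q)%nat.

Lemma prob_le x N k : 0 < x -> (1 <= N)%nat ->
  prob_big r x N k <= rise 1 q * G ((1 - r) * INR q) k N / (x * Rpower (INR N) (1 - r)) ^ q.
Proof.
  intros Hx HN. set (y := x * Rpower (INR N) (1 - r)).
  assert (Hy : 0 < y). { unfold y, Rpower. apply Rmult_lt_0_compat; auto. apply exp_pos. }
  assert (Hyq : 0 < y ^ q) by (apply pow_lt; auto).
  unfold prob_big. fold y.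
  change (fold_right Rplus 0 (map (fun hw : history * R =>
     if Rlt_dec y (INR (Rcount k (fst hw))) then snd hw else 0) (hists r (N - 1))))
   with (sumL (hists r (N - 1)) (fun hw : history * R =>
     if Rlt_dec y (INR (Rcount k (fst hw))) then snd hw else 0)).
  apply Rle_trans with (E r (N - 1) (fun h => / y ^ q * rise (INR (Rcount k h)) q)).
  - unfold E. apply sumL_le. intros hw Hin. destruct (hists_inv r hr _ hw Hin) as [_ Hw].
    destruct (Rlt_dec y (INR (Rcount k (fst hw)))).
    + rewrite <- (Rmult_1_r (snd hw)) at 1. apply Rmult_le_compat_l; auto.
      apply (Rmult_le_reg_l (y ^ q)); auto. rewrite <- Rmult_assoc, Rinv_r, Rmult_1_l, Rmult_1_r by lra.
      apply Rle_trans with (INR (Rcount k (fst hw)) ^ q). apply pow_incr; lra.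
      apply rise_ge_pow, pos_INR.
    + apply Rmult_le_pos; auto. apply Rmult_le_pos. left; apply Rinv_0_lt_compat; auto.
      apply rise_nonneg, pos_INR.
  - rewrite E_scal. unfold Rdiv. rewrite (Rmult_comm (rise 1 q * _)). apply Rmult_le_compat_l.
    left; apply Rinv_0_lt_compat; auto.
    replace N with (S (N - 1)) at 2 by lia. apply moment; auto.
Qed.

Lemma tail_le x M : 0 < x -> 1 < (1 - r) * INR q ->
  tail_sum r x (S M) <= rise 1 q / (x * Rpower (INR (S M)) (1 - r)) ^ q *
     ((1 - r) * INR q / ((1 - r) * INR q - 1)) * G ((1 - r) * INR q) 1 (S M).
Proof.
  intros Hx Hb. set (b := (1 - r) * INR q) in *.
  unfold tail_sum.
  change (fold_right Rplus 0 (map (prob_big r x (S M)) (seq 1 (S M))))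
    with (sumL (seq 1 (S M)) (prob_big r x (S M))).
  set (y := x * Rpower (INR (S M)) (1 - r)).
  assert (Hy : 0 < y). { unfold y, Rpower. apply Rmult_lt_0_compat; auto. apply exp_pos. }
  assert (Hyq : 0 < y ^ q) by (apply pow_lt; auto).
  apply Rle_trans with (sumL (seq 1 (S M)) (fun k => (rise 1 q / y ^ q) * G b k (S M))).
  - apply sumL_le. intros k _. unfold Rdiv. rewrite Rmult_assoc, (Rmult_comm (/ y ^ q)), <- Rmult_assoc.
    apply prob_le; auto; lia.
  - rewrite sumL_scal, sumG by auto.
    assert (0 <= rise 1 q / y ^ q) by (apply Rdiv_le_0_compat; auto; apply rise_nonneg; lra).
    rewrite Rmult_assoc. apply Rmult_le_compat_l; auto.
    assert (0 < INR (S M)) by (apply lt_0_INR; lia).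
    unfold Rdiv. rewrite Rmult_minus_distr_r.
    assert (0 < / (b - 1)) by (apply Rinv_0_lt_compat; lra).
    assert (0 <= INR (S M) * / (b - 1)) by (apply Rmult_le_pos; lra).
    nra.
Qed.
End Mk.


Lemma exp_mono x y : x <= y -> exp x <= exp y.
Proof. intros [H|H]. left; apply exp_increasing; auto. subst; lra. Qed.

Lemma exp_pow u q : exp u ^ q = exp (INR q * u).
Proof. induction q. simpl. rewrite Rmult_0_l, exp_0. ring.
  simpl pow. rewrite IHq, S_INR, <- exp_plus. f_equal. ring. Qed.

Lemma lnstep t : 0 < t -> 1 / (t + 1) <= ln (t + 1) - ln t.
Proof.
  intros Ht. pose proof (exp_ineq1_le (- (1 / (t + 1)))) as H.
  assert (Hq : t / (t + 1) = 1 + - (1 / (t + 1))) by (field; lra).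
  rewrite <- Hq in H. apply ln_le in H. rewrite ln_exp, ln_div in H by lra. lra.
  apply Rdiv_lt_0_compat; lra.
Qed.

Lemma G1_S b M : (1 <= M)%nat -> G b 1 (S M) = G b 1 M * (1 + b / INR M).
Proof. intros H. simpl. destruct M. lia. reflexivity. Qed.

Lemma G1_small b m : INR m <= b -> G b 1 (S m) <= (2 * b) ^ m / INR (fact m).
Proof.
  induction m; intros Hm.
  - simpl. lra.
  - rewrite G1_S by lia. rewrite S_INR in Hm.
    assert (IH := IHm ltac:(pose proof (pos_INR m); lra)).
    assert (0 < INR (S m)) by (apply lt_0_INR; lia).
    assert (Hg : 0 <= G b 1 (S m)) by (apply G_nonneg; pose proof (pos_INR m); lra).
    apply Rle_trans with (G b 1 (S m) * (2 * b / INR (S m))).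
    + apply Rmult_le_compat_l; auto. rewrite S_INR in *.
      replace (2 * b / (INR m + 1)) with (1 + b / (INR m + 1) + (b - (INR m + 1)) / (INR m + 1)) by (field; lra).
      assert (0 <= (b - (INR m + 1)) / (INR m + 1)) by (apply Rdiv_le_0_compat; lra). lra.
    + apply Rle_trans with ((2 * b) ^ m / INR (fact m) * (2 * b / INR (S m))).
      apply Rmult_le_compat_r; auto. pose proof (pos_INR m). apply Rdiv_le_0_compat; lra.
      simpl pow. rewrite fact_simpl, mult_INR. right. field. split. apply INR_fact_neq_0. lra.
Qed.

Lemma G1_large b L d : 0 <= b -> (1 <= L)%nat ->
  G b 1 (L + d) * exp (b / INR (L + d)) <=
  G b 1 L * exp (b / INR L) * exp (b * (ln (INR (L + d)) - ln (INR L))).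
Proof.
  intros Hb HL. induction d.
  - rewrite Nat.add_0_r, Rminus_diag, Rmult_0_r, exp_0. lra.
  - replace (L + S d)%nat with (S (L + d)) by lia. rewrite G1_S by lia.
    set (N := INR (L + d)) in *.
    assert (HN : 0 < N) by (apply lt_0_INR; lia).
    rewrite S_INR. fold N.
    assert (Hg : 0 <= G b 1 (L + d)) by (apply G_nonneg; auto).
    apply Rle_trans with (G b 1 (L + d) * exp (b / N) * exp (b / (N + 1))).
    + rewrite Rmult_assoc, Rmult_assoc. apply Rmult_le_compat_l; auto.
      apply Rmult_le_compat_r. left; apply exp_pos.
      pose proof (exp_ineq1_le (b / N)); lra.
    + apply Rle_trans with (G b 1 L * exp (b / INR L) * exp (b * (ln N - ln (INR L))) * exp (b / (N + 1))).
      apply Rmult_le_compat_r; auto. left; apply exp_pos.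
      rewrite Rmult_assoc. apply Rmult_le_compat_l.
      apply Rmult_le_pos. apply G_nonneg; auto. left; apply exp_pos.
      rewrite <- exp_plus. apply exp_mono.
      pose proof (lnstep N HN).
      assert (b / (N + 1) <= b * (ln (N + 1) - ln N)).
      { unfold Rdiv. replace (b * / (N + 1)) with (b * (1 / (N + 1))) by (field; lra).
        apply Rmult_le_compat_l; auto. }
      lra.
Qed.

Lemma G1_bound b l N : INR l <= b <= INR (S l) -> (S l <= N)%nat ->
  G b 1 N <= 2 ^ l / INR (fact l) * exp 1 * exp (b * ln (INR N)).
Proof.
  intros [Hb1 Hb2] HN. pose proof (pos_INR l) as Hl0.
  set (L := S l) in *. replace N with (L + (N - L))%nat by lia.
  set (d := (N - L)%nat). clearbody d. clear HN.
  assert (HL : 0 < INR L) by (apply lt_0_INR; unfold L; lia).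
  assert (HLN : 0 < INR (L + d)) by (apply lt_0_INR; unfold L; lia).
  assert (Hb : 0 <= b) by lra.
  pose proof (G1_large b L d Hb ltac:(unfold L; lia)) as H1.
  assert (Hg : 0 <= G b 1 (L + d)) by (apply G_nonneg; auto).
  assert (H2 : G b 1 (L + d) <= G b 1 (L + d) * exp (b / INR (L + d))).
  { rewrite <- (Rmult_1_r (G b 1 (L + d))) at 1. apply Rmult_le_compat_l; auto.
    pose proof (exp_ineq1_le (b / INR (L + d))). assert (0 <= b / INR (L + d)) by (apply Rdiv_le_0_compat; lra). lra. }
  eapply Rle_trans. apply H2. eapply Rle_trans. apply H1.
  assert (HGL := G1_small b l Hb1). fold L in HGL.
  assert (He : exp (b / INR L) <= exp 1).
  { apply exp_mono. apply (Rmult_le_reg_r (INR L)); auto. unfold Rdiv. rewrite Rmult_assoc, Rinv_l by lra. lra. }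
  rewrite Rmult_minus_distr_l, Rminus_def, exp_plus.
  assert (HlnL : 0 <= ln (INR L)). { rewrite <- ln_1. apply ln_le. lra. unfold L; rewrite S_INR; lra. }
  assert (Hk : (2 * b) ^ l * exp (- (b * ln (INR L))) <= 2 ^ l).
  { rewrite Rpow_mult_distr.
    assert (Hbl : b ^ l <= exp (INR l * ln (INR L))).
    { rewrite <- exp_pow, exp_ln by auto. apply pow_incr. lra. }
    assert (exp (INR l * ln (INR L)) * exp (- (b * ln (INR L))) <= 1).
    { rewrite <- exp_plus, <- exp_0. apply exp_mono. nra. }
    assert (0 < 2 ^ l) by (apply pow_lt; lra).
    assert (0 <= b ^ l) by (apply pow_le; lra).
    assert (0 < exp (- (b * ln (INR L)))) by apply exp_pos.
    assert (b ^ l * exp (- (b * ln (INR L))) <= 1).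
    { eapply Rle_trans; [|eassumption]. apply Rmult_le_compat_r; lra. }
    rewrite Rmult_assoc. rewrite <- (Rmult_1_r (2 ^ l)) at 2. apply Rmult_le_compat_l; lra. }
  assert (0 <= (2 * b) ^ l) by (apply pow_le; lra).
  assert (0 < INR (fact l)) by apply INR_fact_lt_0.
  assert (0 < exp (b * ln (INR (L + d)))) by apply exp_pos.
  assert (0 < exp (- (b * ln (INR L)))) by apply exp_pos.
  assert (0 < exp (b / INR L)) by apply exp_pos.
  apply Rle_trans with ((2 * b) ^ l / INR (fact l) * exp 1 * (exp (b * ln (INR (L + d))) * exp (- (b * ln (INR L))))).
  - apply Rmult_le_compat_r. apply Rmult_le_pos; lra.
    apply Rmult_le_compat; [apply G_nonneg; lra | lra | exact HGL | exact He].
  - unfold Rdiv.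
    replace ((2 * b) ^ l * / INR (fact l) * exp 1 * (exp (b * ln (INR (L + d))) * exp (- (b * ln (INR L)))))
      with (((2 * b) ^ l * exp (- (b * ln (INR L)))) * (/ INR (fact l) * exp 1 * exp (b * ln (INR (L + d))))) by ring.
    replace (2 ^ l * / INR (fact l) * exp 1 * exp (b * ln (INR (L + d))))
      with (2 ^ l * (/ INR (fact l) * exp 1 * exp (b * ln (INR (L + d))))) by ring.
    apply Rmult_le_compat_r; auto.
    apply Rmult_le_pos. apply Rmult_le_pos. left; apply Rinv_0_lt_compat; auto. left; apply exp_pos. lra.
Qed.


Lemma rise1_fact q : rise 1 q = INR (fact q).
Proof. induction q. reflexivity. simpl rise. rewrite IHq, fact_simpl, mult_INR, S_INR. ring. Qed.

Lemma fact_bound l d : INR (fact (l + d)) <= INR (fact l) * INR (l + d) ^ d.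
Proof.
  induction d. rewrite Nat.add_0_r. simpl. lra.
  replace (l + S d)%nat with (S (l + d)) by lia. rewrite fact_simpl, mult_INR.
  change (INR (S (l + d)) ^ S d) with (INR (S (l + d)) * INR (S (l + d)) ^ d). pose proof (INR_fact_lt_0 l).
  assert (INR (l + d) ^ d <= INR (S (l + d)) ^ d) by (apply pow_incr; split; [apply pos_INR| apply le_INR; lia]).
  assert (0 <= INR (S (l + d))) by apply pos_INR.
  assert (0 <= INR (fact (l+d))) by apply pos_INR.
  apply Rle_trans with (INR (S (l + d)) * (INR (fact l) * INR (l + d) ^ d)).
  apply Rmult_le_compat_l; auto.
  replace (INR (fact l) * (INR (S (l + d)) * INR (S (l + d)) ^ d)) with
    (INR (S (l + d)) * (INR (fact l) * INR (S (l + d)) ^ d)) by ring.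
  apply Rmult_le_compat_l; auto. apply Rmult_le_compat_l; lra.
Qed.

Lemma q_le_2pow q : INR q <= 2 ^ q.
Proof. induction q. simpl; lra. rewrite S_INR. simpl. assert (1 <= 2 ^ q) by (apply pow_R1_Rle; lra). lra. Qed.

Lemma const_bound r q l x : 0 < r < 1 -> 0 < x -> (1 <= q)%nat ->
  INR l <= (1 - r) * INR q <= INR l + 1 ->
  INR (fact q) * 2 ^ l / (INR (fact l) * x ^ q) <= (4 * Rpower (INR q) r / x) ^ q.
Proof.
  intros hr Hx Hq [Hl1 Hl2].
  assert (Hq0 : 0 < INR q) by (apply lt_0_INR; lia).
  assert (Hlq : (l <= q)%nat) by (apply INR_le; nra).
  set (d := (q - l)%nat). assert (Hqd : q = (l + d)%nat) by (unfold d; lia).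
  assert (Hf : INR (fact q) <= INR (fact l) * INR q ^ d) by (rewrite Hqd at 1 2; apply fact_bound).
  assert (Hd : INR d <= r * INR q + 1) by (unfold d; rewrite minus_INR by auto; lra).
  assert (Hlnq : 0 <= ln (INR q)). { rewrite <- ln_1. apply ln_le. lra. apply (le_INR 1); auto. }
  assert (Hpw : INR q ^ d <= INR q * Rpower (INR q) r ^ q).
  { rewrite <- Rpower_pow by auto. unfold Rpower. rewrite exp_pow.
    rewrite <- (exp_ln (INR q)) at 2 by auto. rewrite <- exp_plus. apply exp_mono. nra. }
  assert (H2l : 2 ^ l <= 2 ^ q) by (apply Rle_pow; [lra|auto]).
  assert (H2q := q_le_2pow q).
  assert (Hfl : 0 < INR (fact l)) by apply INR_fact_lt_0.
  assert (Hxq : 0 < x ^ q) by (apply pow_lt; auto).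
  assert (HA : 0 <= Rpower (INR q) r ^ q) by (apply pow_le; unfold Rpower; left; apply exp_pos).
  assert (H2l0 : 0 < 2 ^ l) by (apply pow_lt; lra).
  apply Rle_trans with (INR q * Rpower (INR q) r ^ q * 2 ^ l / x ^ q).
  - unfold Rdiv. rewrite Rinv_mult. 
    apply Rle_trans with (INR (fact l) * INR q ^ d * 2 ^ l * (/ INR (fact l) * / x ^ q)).
    + apply Rmult_le_compat_r. apply Rmult_le_pos; left; apply Rinv_0_lt_compat; auto.
      apply Rmult_le_compat_r; lra.
    + replace (INR (fact l) * INR q ^ d * 2 ^ l * (/ INR (fact l) * / x ^ q))
        with (INR q ^ d * 2 ^ l * / x ^ q) by (field; lra).
      apply Rmult_le_compat_r. left; apply Rinv_0_lt_compat; auto.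
      apply Rmult_le_compat_r; lra.
  - unfold Rdiv. rewrite !Rpow_mult_distr, <- Rinv_pow by lra.
    replace (4 ^ q) with (2 ^ q * 2 ^ q) by (rewrite <- Rpow_mult_distr; f_equal; lra).
    apply Rmult_le_compat_r. left; apply Rinv_0_lt_compat; auto.
    replace (2 ^ q * 2 ^ q * Rpower (INR q) r ^ q) with (2 ^ q * Rpower (INR q) r ^ q * 2 ^ q) by ring.
    apply Rmult_le_compat; try nra.
Qed.


Lemma per_q r q x : 0 < r < 1 -> 2 <= (1 - r) * INR q -> 0 < x ->
  Rbar_le (LimSup_seq (fun N => tail_sum r x N))
          (Finite (2 * exp 1 * (4 * Rpower (INR q) r / x) ^ q)).
Proof.
  intros hr Hb Hx. set (b := (1 - r) * INR q) in *.
  assert (Hq : (1 <= q)%nat). { destruct q. unfold b in Hb; simpl in Hb. lra. lia. }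
  destruct (nfloor_ex b ltac:(lra)) as [l [Hl1 Hl2]].
  rewrite <- (LimSup_seq_const (2 * exp 1 * (4 * Rpower (INR q) r / x) ^ q)).
  apply LimSup_le. exists (S l). intros N HN. destruct N as [|M]; [lia|].
  eapply Rle_trans. apply (tail_le r hr q Hq x M Hx). fold b. lra. fold b.
  set (E := exp (b * ln (INR (S M)))).
  assert (HX : (x * Rpower (INR (S M)) (1 - r)) ^ q = x ^ q * E).
  { rewrite Rpow_mult_distr. unfold Rpower. rewrite exp_pow. unfold E, b. do 2 f_equal. ring. }
  rewrite HX, rise1_fact.
  assert (HG := G1_bound b l (S M) ltac:(rewrite S_INR; lra) HN).
  fold E in HG.
  assert (HE : 0 < E) by apply exp_pos.
  assert (Hxq : 0 < x ^ q) by (apply pow_lt; auto).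
  assert (HA : 0 < INR (fact q)) by apply INR_fact_lt_0.
  assert (Hfl : 0 < INR (fact l)) by apply INR_fact_lt_0.
  assert (H0 : 0 <= INR (fact q) / (x ^ q * E)) by (apply Rdiv_le_0_compat; nra).
  assert (HG0 : 0 <= G b 1 (S M)) by (apply G_nonneg; lra).
  assert (Hbb : b / (b - 1) <= 2). { apply (Rmult_le_reg_r (b - 1)). lra. unfold Rdiv. rewrite Rmult_assoc, Rinv_l by lra. lra. }
  assert (Hbb0 : 0 <= b / (b - 1)) by (apply Rdiv_le_0_compat; lra).
  apply Rle_trans with (INR (fact q) / (x ^ q * E) * 2 * (2 ^ l / INR (fact l) * exp 1 * E)).
  { apply Rmult_le_compat; try apply Rmult_le_pos; auto. apply Rmult_le_compat_l; auto. }
  replace (INR (fact q) / (x ^ q * E) * 2 * (2 ^ l / INR (fact l) * exp 1 * E))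
    with (2 * exp 1 * (INR (fact q) * 2 ^ l / (INR (fact l) * x ^ q))) by (field; repeat split; lra).
  apply Rmult_le_compat_l. pose proof (exp_pos 1); lra.
  apply const_bound; auto. fold b. lra.
Qed.


Theorem proposition1p5 (r : R) (hr : 0 < r < 1) :
  exists C1 C2 : R, 0 < C1 /\ 0 < C2 /\
    forall x : R, 1 <= x ->
      Rbar_le (LimSup_seq (fun N => tail_sum r x N))
              (Finite (C1 * exp (- (C2 * Rpower x (1 / r))))).
Proof.
  assert (Ha : 0 < 1 - r) by lra.
  destruct (nfloor_ex (2 / (1 - r))) as [n0 [Hn1 Hn2]].
  { apply Rdiv_le_0_compat; lra. }
  set (q0 := S n0).
  assert (Hq0 : 2 <= (1 - r) * INR q0).
  { unfold q0. rewrite S_INR. apply (Rmult_le_reg_l (/ (1 - r))). apply Rinv_0_lt_compat; lra.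
    rewrite <- Rmult_assoc, Rinv_l, Rmult_1_l by lra. rewrite Rmult_comm. unfold Rdiv in Hn2. lra. }
  assert (Hln2 : 0 < ln 2) by (rewrite <- ln_1; apply ln_increasing; lra).
  set (K := Rpower 8 (1 / r)).
  assert (HK : 0 < K) by (unfold K, Rpower; apply exp_pos).
  set (M0 := 2 * exp 1 * (4 * Rpower (INR q0) r) ^ q0).
  assert (HM0 : 0 <= M0).
  { unfold M0. apply Rmult_le_pos. pose proof (exp_pos 1); lra. apply pow_le.
    unfold Rpower; pose proof (exp_pos (r * ln (INR q0))); lra. }
  exists (4 * exp 1 + M0 * exp (ln 2 * INR q0)), (ln 2 / K).
  assert (He1 : 0 < exp 1) by apply exp_pos.
  split. { pose proof (exp_pos (ln 2 * INR q0)). nra. }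
  split. { apply Rdiv_lt_0_compat; auto. }
  intros x Hx.
  set (z := Rpower x (1 / r) / K).
  assert (Hz : 0 < z) by (unfold z, Rpower; apply Rdiv_lt_0_compat; auto; apply exp_pos).
  replace (ln 2 / K * Rpower x (1 / r)) with (ln 2 * z) by (unfold z; field; lra).
  assert (Hexpz : 0 < exp (- (ln 2 * z))) by apply exp_pos.
  destruct (Rle_lt_dec (INR q0) z) as [Hbig|Hsmall].
  - destruct (nfloor_ex z ltac:(lra)) as [q [Hq1 Hq2]].
    assert (Hqq : (q0 <= q)%nat).
    { assert (INR q0 < INR (S q)) by (rewrite S_INR; lra). apply INR_lt in H. lia. }
    assert (Hbq : 2 <= (1 - r) * INR q).
    { apply Rle_trans with ((1 - r) * INR q0); auto. apply Rmult_le_compat_l. lra. apply le_INR; auto. }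
    eapply Rbar_le_trans. apply (per_q r q x); auto; lra.
    cbn [Rbar_le].
    assert (Hqpos : 0 < INR q) by (apply lt_0_INR; unfold q0 in Hqq; lia).
    assert (Hzr : Rpower z r = x / 8).
    { unfold z, K, Rpower. rewrite ln_div by apply exp_pos. rewrite !ln_exp.
      replace (r * (1 / r * ln x - 1 / r * ln 8)) with (ln x + - ln 8) by (field; lra).
      rewrite exp_plus, exp_Ropp, !exp_ln by lra. field. }
    assert (Hqr : Rpower (INR q) r <= x / 8).
    { rewrite <- Hzr. unfold Rpower. apply exp_mono. apply Rmult_le_compat_l. lra. apply ln_le; auto. }
    assert (Hqr0 : 0 < Rpower (INR q) r) by (unfold Rpower; apply exp_pos).
    assert (Hhalf : (4 * Rpower (INR q) r / x) ^ q <= (/ 2) ^ q).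
    { apply pow_incr. split. apply Rdiv_le_0_compat; lra.
      apply (Rmult_le_reg_r x). lra. unfold Rdiv. rewrite Rmult_assoc, Rinv_l by lra. lra. }
    assert (Hhalf2 : (/ 2) ^ q <= 2 * exp (- (ln 2 * z))).
    { replace (/ 2) with (exp (- ln 2)) by (rewrite exp_Ropp, exp_ln; lra).
      rewrite exp_pow. rewrite <- (exp_ln 2) at 2 by lra. rewrite <- exp_plus. apply exp_mono.
      assert (ln 2 * (z - 1) <= ln 2 * INR q) by (apply Rmult_le_compat_l; lra). lra. }
    pose proof (exp_pos (ln 2 * INR q0)).
    assert (0 <= M0 * exp (ln 2 * INR q0) * exp (- (ln 2 * z))) by (apply Rmult_le_pos; [apply Rmult_le_pos|]; lra).
    apply Rle_trans with (2 * exp 1 * (2 * exp (- (ln 2 * z)))).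
    { apply Rmult_le_compat_l. lra. lra. }
    rewrite Rmult_plus_distr_r.
    replace (2 * exp 1 * (2 * exp (- (ln 2 * z)))) with (4 * exp 1 * exp (- (ln 2 * z))) by ring.
    lra.
  - eapply Rbar_le_trans. apply (per_q r q0 x); auto; try lra.
    cbn [Rbar_le].
    assert (Hq0r : 0 < Rpower (INR q0) r) by (unfold Rpower; apply exp_pos).
    assert (Hb : (4 * Rpower (INR q0) r / x) ^ q0 <= (4 * Rpower (INR q0) r) ^ q0).
    { apply pow_incr. split. apply Rdiv_le_0_compat; lra.
      unfold Rdiv. rewrite <- (Rmult_1_r (4 * Rpower (INR q0) r)) at 2.
      apply Rmult_le_compat_l. lra. rewrite <- Rinv_1. apply Rinv_le_contravar; lra. }
    assert (H1 : 1 <= exp (ln 2 * INR q0) * exp (- (ln 2 * z))).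
    { rewrite <- exp_plus, <- exp_0. apply exp_mono.
      assert (ln 2 * z <= ln 2 * INR q0) by (apply Rmult_le_compat_l; lra). lra. }
    apply Rle_trans with M0.
    { unfold M0. apply Rmult_le_compat_l; auto. lra. }
    assert (0 <= 4 * exp 1 * exp (- (ln 2 * z))) by nra.
    nra.
Qed.
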